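(* Let $X\subset\mathbb{R}^n$ and $U\subset\mathbb{R}^m$ be compact, $f:X\times U\to\mathbb{R}^n$ Lipschitz continuous, and consider $\dot{\mathbf{x}}(t)=f(\mathbf{x}(t),\mathbf{u}(t))$. Let $\Phi=\bigwedge_{i=1}^N\phi_i$ be an STL specification of the fragment described in the context, over $[0,T]$, such that $\Phi_a(t)\neq\emptyset$ for all $t\in[0,T]$. Let $W=X\times[0,T]$ and $\mathcal{S}^\Phi(t)=\{(x,t)\in W \mid \min_{\varphi_i\in\Phi_a(t)}\rho^{\varphi_i}(x)\geq 0\}$. Suppose there exist a time-varying set $\mathcal{C}^\Phi(t)\subset\mathcal{S}^\Phi(t)$, a continuously differentiable function $\mathcal{B}:W\to\mathbb{R}$, a continuous controller $g:X\times[0,T]\to U$ and an extended class $\mathcal{K}$ function $\alpha$ such that: $\mathcal{B}(x,t)\geq 0$ for all $(x,t)\in\mathcal{C}^\Phi(t)$; $\mathcal{B}(x,t)<0$ for all $(x,t)\in W\setminus\mathcal{C}^\Phi(t)$; and $\frac{\partial\mathcal{B}}{\partial x}(x,t) f(x,g(x,t))+\frac{\partial\mathcal{B}}{\partial t}(x,t)\geq-\alpha(\mathcal{B}(x,t))$ for all $(x,t)\in W$. Then the trajectory $\mathbf{x}_{x_0,\mathbf{u}}$ starting from $x_0$ with $(x_0,0)\in\mathcal{C}^\Phi(0)$ under $\mathbf{u}(t)=g(\mathbf{x}(t),t)$ satisfies $(\mathbf{x}_{x_0,\mathbf{u}}(t),t)\in\mathcal{C}^\Phi(t)$ for all $t\in[0,T]$,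 and $\mathbf{x}_{x_0,\mathbf{u}}\models\Phi$.
   Context: STL fragment: a predicate $\mu$ is given by a function $h:X\to\mathbb{R}$ and is true at $x$ iff $h(x)\geq0$. Non-temporal formulas $\varphi ::= \mathsf{true}\mid\mu\mid\lnot\varphi\mid\varphi_1\wedge\varphi_2\mid\varphi_1\vee\varphi_2$, with pointwise robustness $\rho^\mu(x)=h(x)$, $\rho^{\lnot\varphi}=-\rho^\varphi$, $\rho^{\varphi_1\wedge\varphi_2}=\min(\rho^{\varphi_1},\rho^{\varphi_2})$, $\rho^{\varphi_1\vee\varphi_2}=\max(\rho^{\varphi_1},\rho^{\varphi_2})$. Each $\phi_i$ is either $\square_{[a_i,b_i]}\varphi_i$ or $\lozenge_{[a_i,b_i]}\varphi_i$ with $[a_i,b_i]\subseteq[0,T]$. For a signal $\mathbf{x}$, $\rho^{\square_{[a,b]}\varphi}(\mathbf{x})=\min_{t'\in[a,b]}\rho^\varphi(\mathbf{x}(t'))$, $\rho^{\lozenge_{[a,b]}\varphi}(\mathbf{x})=\max_{t'\in[a,b]}\rho^\varphi(\mathbf{x}(t'))$, $\rho^\Phi(\mathbf{x})=\min_i\rho^{\phi_i}(\mathbf{x})$, and $\mathbf{x}\models\Phi$ iff $\rho^\Phi(\mathbf{x})\geq0$. For each $i$ define an interval $I_i=[a_i,b_i]$ if $\phi_i$ is an always formula, and $I_i=[t_i^*,t_i^*+\delta]$ for some fixed $a_i\leq t_i^*<t_i^*+\delta\leq b_i$, $\delta>0$, if $\phi_i$ is an eventually formula. The active predicate set is $\Phi_a(t)=\{\varphi_i\mid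 t\in I_i\}$. An extended class $\mathcal{K}$ function is continuous, strictly increasing, with $\alpha(0)=0$. $\mathbf{x}_{x_0,\mathbf{u}}$ denotes the trajectory from $x_0$ under input $\mathbf{u}$. *)

(* Defs.v *)
From HB Require Import structures.
From mathcomp Require Import all_boot all_order all_algebra.
From mathcomp Require Import all_classical all_reals all_analysis.
Set Implicit Arguments. Unset Strict Implicit. Unset Printing Implicit Defensive.
Import Order.TTheory GRing.Theory Num.Theory.
Import numFieldNormedType.Exports.
Local Open Scope classical_set_scope.
Local Open Scope ring_scope.

Section STL.
Variables (R : realType) (n : nat).

(** Non-temporal STL formulas over states in R^n (row vectors). A predicate
    is given by a function h : R^n -> R, true at x iff h x >= 0. *)
Inductive stl_nt : Type :=
  | STrue
  | SPred of ('rV[R]_n -> R)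
  | SNot of stl_nt
  | SAnd of stl_nt & stl_nt
  | SOr of stl_nt & stl_nt.

(** Pointwise robustness.  rho^true is taken to be +oo, hence the
    extended-real codomain. *)
Fixpoint rho (phi : stl_nt) (x : 'rV[R]_n) : \bar R :=
  match phi with
  | STrue => +oo%E
  | SPred h => (h x)%:E
  | SNot p => (- rho p x)%E
  | SAnd p q => Order.min (rho p x) (rho q x)
  | SOr p q => Order.max (rho p x) (rho q x)
  end.

Inductive stl_t : Type :=
  | Always of R & R & stl_nt
  | Eventually of R & R & stl_nt.

Definition tf_a (p : stl_t) := match p with Always a _ _ | Eventually a _ _ => a end.
Definition tf_b (p : stl_t) := match p with Always _ b _ | Eventually _ b _ => b end.
Definition tf_phi (p : stl_t) := match p with Always _ _ q | Eventually _ _ q => q end.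
Definition is_always (p : stl_t) := if p is Always _ _ _ then true else false.

(** Robustness of a temporal formula along a signal xs : R -> R^n
    (min/max over [a,b] rendered as inf/sup). *)
Definition rho_t (p : stl_t) (xs : R -> 'rV[R]_n) : \bar R :=
  match p with
  | Always a b q => ereal_inf [set rho q (xs s) | s in `[a, b]]
  | Eventually a b q => ereal_sup [set rho q (xs s) | s in `[a, b]]
  end.

Definition rho_Phi (N : nat) (Phi : 'I_N -> stl_t) (xs : R -> 'rV[R]_n) : \bar R :=
  \big[Order.min/+oo%E]_(i < N) rho_t (Phi i) xs.

Definition sat (N : nat) (Phi : 'I_N -> stl_t) (xs : R -> 'rV[R]_n) : Prop :=
  (0 <= rho_Phi Phi xs)%E.

Definition in_I (N : nat) (Phi : 'I_N -> stl_t) (tstar : 'I_N -> R) (delta : R)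
  (i : 'I_N) (t : R) : bool :=
  if is_always (Phi i) then (tf_a (Phi i) <= t <= tf_b (Phi i))
  else (tstar i <= t <= tstar i + delta).

Definition active_nonempty N (Phi : 'I_N -> stl_t) tstar delta (t : R) : Prop :=
  exists i : 'I_N, in_I Phi tstar delta i t.

Definition inW (X : set 'rV[R]_n) (T : R) (x : 'rV[R]_n) (t : R) : Prop :=
  X x /\ 0 <= t <= T.

Definition in_S (X : set 'rV[R]_n) (T : R) N (Phi : 'I_N -> stl_t) tstar delta
  (x : 'rV[R]_n) (t : R) : Prop :=
  inW X T x t /\
  (0 <= \big[Order.min/+oo%E]_(i < N | in_I Phi tstar delta i t)
          rho (tf_phi (Phi i)) x)%E.

Definition dBdx (B : 'rV[R]_n * R -> R) (x : 'rV[R]_n) (t : R) (v : 'rV[R]_n) : R :=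
  'D_v (fun y => B (y, t)) x.
Definition dBdt (B : 'rV[R]_n * R -> R) (x : 'rV[R]_n) (t : R) : R :=
  derive1 (fun s => B (x, s)) t.

Definition C1_on (B : 'rV[R]_n * R -> R) (W : set ('rV[R]_n * R)) : Prop :=
  (forall p, W p -> differentiable B p) /\
  (forall v : 'rV[R]_n * R, {within W, continuous (fun p => 'd B p v)}).

End STL.

Definition ext_classK (R : realType) (alpha : R -> R) : Prop :=
  continuous alpha /\ {homo alpha : x y / x < y} /\ alpha 0 = 0.

(* Main.v *)
Require Import Defs.
From HB Require Import structures.
From mathcomp Require Import all_boot all_order all_algebra.
From mathcomp Require Import all_classical all_reals all_analysis.
Import Order.TTheory GRing.Theory Num.Theory.
Import numFieldNormedType.Exports.
Local Open Scope classical_set_scope.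
Local Open Scope ring_scope.

From mathcomp Require Import lra.
Section Chain.
Variables (R : realType) (n : nat).
Implicit Types (B : 'rV[R]_n * R -> R).

Lemma dBdxE B x t v : differentiable B (x, t) -> dBdx B x t v = 'd B (x, t) (v, 0).
Proof.
move=> dB; rewrite /dBdx.
have dj : differentiable (fun y : 'rV[R]_n => (y, t)) x.
  by apply: differentiable_pair => //.
have -> : (fun y => B (y, t)) = B \o (fun y : 'rV[R]_n => (y, t)) by [].
rewrite deriveE; last exact: differentiable_comp.
by rewrite diff_comp // /= diff_pair //= diff_cst (@diff_val _ _ _ _ _ id id).
Qed.

Lemma dBdtE B x t : differentiable B (x, t) -> dBdt B x t = 'd B (x, t) (0, 1).
Proof.
move=> dB; rewrite /dBdt.
have dj : differentiable (fun s : R => (x, s)) t.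
  by apply: differentiable_pair => //.
have -> : (fun s => B (x, s)) = B \o (fun s : R => (x, s)) by [].
rewrite derive1E deriveE; last exact: differentiable_comp.
by rewrite diff_comp // /= diff_pair //= diff_cst (@diff_val _ _ _ _ _ id id).
Qed.

Lemma chain B (xs : R -> 'rV[R]_n) t v :
  differentiable B (xs t, t) -> is_derive t 1 xs v ->
  is_derive t 1 (fun s => B (xs s, s)) (dBdx B (xs t) t v + dBdt B (xs t) t).
Proof.
move=> dB dxs.
have dx : differentiable xs t by apply/derivable1_diffP; exact: ex_derive.
have dh : differentiable (fun s : R => (xs s, s)) t.
  by apply: differentiable_pair => //.
have -> : (fun s => B (xs s, s)) = B \o (fun s : R => (xs s, s)) by [].
have dc : differentiable (B \o (fun s : R => (xs s, s))) t.
  exact: differentiable_comp.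
apply: DeriveDef; first exact: diff_derivable.
rewrite deriveE // diff_comp // /= diff_pair //= (@diff_val _ _ _ _ _ id id).
rewrite dBdxE // dBdtE // -linearD /=.
rewrite -derive1E' // derive1E derive_val.
congr ('d B _ _); apply: injective_projections => /=; rewrite ?addr0 ?add0r //.
Qed.

End Chain.
Lemma barrier (R : realType) (b db alpha : R -> R) (T : R) :
  {homo alpha : x y / x < y} -> alpha 0 = 0 ->
  {within `[0, T], continuous b} ->
  (forall t, 0 < t < T -> is_derive t 1 b (db t)) ->
  (forall t, 0 < t < T -> - alpha (b t) <= db t) ->
  0 <= b 0 -> forall t, 0 <= t <= T -> 0 <= b t.
Proof.
move=> ha a0 cb db_ dbge b0 t1 /andP[t10 t1T].
rewrite leNgt; apply/negP => bt1.
pose S := [set s | 0 <= s <= t1 /\ 0 <= b s].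
have hS : has_sup S.
  split; first by exists 0; rewrite /S /= lexx t10 b0.
  by exists t1 => s [/andP[_ ?] _].
set t0 := sup S.
have t0ub := sup_upper_bound hS.
have t0le : t0 <= t1 by apply: ge_sup; [case: hS|move=> s [/andP[_ ?] _]].
have t0ge : 0 <= t0 by apply: t0ub; rewrite /S /= lexx t10 b0.
have neg s : t0 < s -> s <= t1 -> b s < 0.
  move=> t0s st1; rewrite ltNge; apply/negP => bs.
  have : S s by split => //; rewrite st1 andbT; exact: (le_trans t0ge (ltW t0s)).
  by move/t0ub; rewrite leNgt t0s.
have bt0 : 0 <= b t0.
  rewrite leNgt; apply/negP => bt0.
  have H : b @ within `[0, T] (nbhs t0) --> b t0.
    apply: (proj1 (subspace_continuousP _ _) cb).
    by rewrite /= in_itv /= t0ge (le_trans t0le t1T).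
  move/cvgrPdist_lt: H => /(_ (- b t0)); rewrite oppr_gt0 => /(_ bt0).
  rewrite /within /= => /nbhs_ballP [e e0 he].
  have [s Ss lts] := sup_adherent e0 hS.
  have := he s; rewrite /ball /=.
  have st0 : s <= t0 := t0ub _ Ss.
  case: Ss => /andP[s0 st1] bs.
  have h1 : `|t0 - s| < e by move: lts; rewrite -/t0 ger0_norm ?subr_ge0 //; lra.
  have h2 : s \in `[0, T] by rewrite in_itv /= s0 (le_trans st1 t1T).
  move=> /(_ h1 h2); rewrite ltr_norml => /andP[+ _]; lra.
have t0t1 : t0 < t1 by rewrite lt_neqAle t0le andbT; apply/eqP => e; move: bt0; rewrite e; lra.
have cont : {within `[t0, t1], continuous b}.
  apply: continuous_subspaceW cb => x /=; rewrite !in_itv /= => /andP[? ?].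
  by rewrite (le_trans t0ge) // (le_trans _ t1T).
have der x : x \in `]t0, t1[ -> is_derive x 1 b (db x).
  rewrite in_itv /= => /andP[? ?]; apply: db_.
  by rewrite (le_lt_trans t0ge) // (lt_le_trans _ t1T).
have [c cI hc] := MVT t0t1 der cont.
move: (cI); rewrite in_itv /= => /andP[c0 c1].
have bc : b c < 0 by apply: neg => //; exact: ltW.
have : - alpha (b c) <= db c.
  by apply: dbge; rewrite (le_lt_trans t0ge) // (lt_le_trans _ t1T).
have : alpha (b c) < 0 by rewrite -a0; exact: ha.
have : 0 < (t1 - t0) by rewrite subr_gt0.
move: hc bt0 bt1; nra.
Qed.

Theorem theorem2 (R : realType) (n m : nat)
  (X : set 'rV[R]_n) (U : set 'rV[R]_m)
  (f : 'rV[R]_n -> 'rV[R]_m -> 'rV[R]_n)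
  (T : R) (N : nat) (Phi : 'I_N -> stl_t R n)
  (tstar : 'I_N -> R) (delta : R)
  (C : 'rV[R]_n -> R -> Prop)
  (B : 'rV[R]_n * R -> R)
  (g : 'rV[R]_n -> R -> 'rV[R]_m)
  (alpha : R -> R)
  (x0 : 'rV[R]_n) (xs : R -> 'rV[R]_n) :
  compact X -> compact U ->
  [lipschitz f p.1 p.2 | p in X `*` U] ->
  (forall i, 0 <= tf_a (Phi i) /\ tf_a (Phi i) <= tf_b (Phi i) /\ tf_b (Phi i) <= T) ->
  0 < delta ->
  (forall i, ~~ is_always (Phi i) ->
     tf_a (Phi i) <= tstar i /\ tstar i < tstar i + delta /\
     tstar i + delta <= tf_b (Phi i)) ->
  (forall t, 0 <= t <= T -> active_nonempty Phi tstar delta t) ->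
  (forall x t, C x t -> in_S X T Phi tstar delta x t) ->
  C1_on B [set p | inW X T p.1 p.2] ->
  (forall x t, inW X T x t -> U (g x t)) ->
  {within [set p | inW X T p.1 p.2], continuous (fun p => g p.1 p.2)} ->
  ext_classK alpha ->
  (forall x t, C x t -> 0 <= B (x, t)) ->
  (forall x t, inW X T x t -> ~ C x t -> B (x, t) < 0) ->
  (forall x t, inW X T x t ->
     dBdx B x t (f x (g x t)) + dBdt B x t >= - alpha (B (x, t))) ->
  (* xs is a trajectory of dx/dt = f(x, u), u(t) = g(x(t), t), from x0 *)
  C x0 0 ->
  xs 0 = x0 ->
  (forall t, 0 <= t <= T -> X (xs t)) ->
  {within `[0, T], continuous xs} ->
  (forall t, 0 < t < T -> is_derive t 1 xs (f (xs t) (g (xs t) t))) ->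
  (forall t, 0 <= t <= T -> C (xs t) t) /\ sat Phi xs.
Proof.
move=> _ _ _ hPhi _ hstar _ CS [dB _] _ _ [_ [ha a0]] CB0 nCB dBge C0 xs0 Xxs cxs dxs.
have dBt t : 0 <= t <= T -> differentiable B (xs t, t).
  by move=> tT; apply: dB; split => //; exact: Xxs.
pose b s := B (xs s, s).
have cb : {within `[0, T], continuous b}.
  have -> : b = B \o (fun s => (xs s, s)) by [].
  apply: within_continuous_comp.
    move=> _ /set_mem [s /= sI <-]; apply: differentiable_continuous.
    by apply: dBt; move: sI; rewrite /= in_itv.
  apply/subspace_continuousP => s sI.
  have h1 : xs @ within `[0, T] (nbhs s) --> xs s.
    exact: (proj1 (subspace_continuousP _ _) cxs).
  have h2 : id @ within `[0, T] (nbhs s) --> s by exact: cvg_within.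
  exact: (@cvg_pair _ _ _ _ _ _ _ _ _ xs id h1 h2).
have bpos : forall t, 0 <= t <= T -> 0 <= b t.
  apply: (@barrier R b (fun t => dBdx B (xs t) t (f (xs t) (g (xs t) t)) + dBdt B (xs t) t) alpha T ha a0 cb).
  - move=> t /andP[t0 tT]; apply: chain; first by apply: dBt; rewrite !ltW.
    by apply: dxs; rewrite t0 tT.
  - move=> t /andP[t0 tT]; apply: dBge; split; by [apply: Xxs; rewrite !ltW | rewrite !ltW].
  - by rewrite /b xs0; exact: CB0.
have HC : forall t, 0 <= t <= T -> C (xs t) t.
  move=> t tT; apply: contrapT => nC.
  have := nCB _ _ (conj (Xxs t tT) tT) nC.
  by rewrite ltNge bpos.
split => //.
rewrite /sat /rho_Phi; apply: le_bigmin => // i _.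
have act s : 0 <= s <= T -> in_I Phi tstar delta i s ->
    (0 <= rho (tf_phi (Phi i)) (xs s))%E.
  move=> sT hi; have [_ hS] := CS _ _ (HC s sT).
  apply: (le_trans hS). by rewrite (bigmin_le_cond _ _ hi).
have := hPhi i; have := hstar i; have := act; rewrite /in_I.
case E: (Phi i) => [a' b' q|a' b' q] /= {}act hst [a0i [abi bT]].
- apply/ereal_infP => _ [s sI <-]; move: sI; rewrite /= in_itv /= => /andP[s1 s2].
  apply: act; first by rewrite (le_trans a0i s1) (le_trans s2 bT).
  by rewrite s1 s2.
- have [h1 [h2 h3]] := hst isT.
  have Hs : [set rho q (xs s) | s in `[a', b']] (rho q (xs (tstar i))).
    exists (tstar i) => //.
    by rewrite /= in_itv /= h1 (le_trans (ltW h2) h3).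
  apply: (le_trans _ (ereal_sup_ubound Hs)).
  apply: act; last by rewrite lexx ltW.
  by rewrite (le_trans a0i h1) (le_trans (ltW h2) (le_trans h3 bT)).
Qed.
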